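(* Let $\mathscr Q_n$ be a non-singular quadric in $\mathrm{PG}(n,2)$ of projective index $g\ge1$, let $0\le s<g$, let $\alpha_s$ be an $s$-dimensional subspace contained in $\mathscr Q_n$, and let $\Gamma_s$ be the graph constructed from $\alpha_s$ as described below. Then the maximum size of a clique in $\Gamma_s$ is $2^{g+1}-1$.
   Context: A non-singular quadric $\mathscr Q_n$ in $\mathrm{PG}(n,2)$ is the point set of a non-degenerate quadric; its projective index $g$ is the largest dimension of a projective subspace contained in $\mathscr Q_n$. The point-graph $\Gamma$ has vertex set the points of $\mathscr Q_n$, two distinct points adjacent iff the line joining them is contained in $\mathscr Q_n$. A point $X$ of $\mathscr Q_n$ has type (i) if $X\in\alpha_s$; type (ii) if $X\notin\alpha_s$ and $\langle\alpha_s,X\rangle\subseteq\mathscr Q_n$; type (iii) otherwise. Let $\mathcal X_s$ be the type (ii) points and $\mathcal Y_s$ the points of type (i) or (iii). The graph $\Gamma_s$ has the same vertex set as $\Gamma$ and the same edges, except that for each vertex $R\in\mathcal Y_s$ having exactly $\frac12|\mathcal X_s|$ neighbours in $\mathcal X_s$ (in $\Gamma$), those edges are deleted and $R$ is joined instead to the other $\frac12|\mathcal X_s|$ vertices of $\mathcal X_s$. *)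

(* Defs.v *)
From mathcomp Require Import all_boot all_order all_algebra.
Set Implicit Arguments. Unset Strict Implicit. Unset Printing Implicit Defensive.
Import GRing.Theory.
Local Open Scope ring_scope.

(* Quadratic form Q(v) = v A v^T on row vectors of 'F_2^(n+1); every
   quadratic form over F_2 (sum_{i<=j} a_ij x_i x_j) is of this shape. *)
Definition qf (n : nat) (A : 'M['F_2]_n.+1) (v : 'rV['F_2]_n.+1) : 'F_2 :=
  (v *m A *m v^T) 0 0.

Definition polar (n : nat) (A : 'M['F_2]_n.+1) (x y : 'rV['F_2]_n.+1) : 'F_2 :=
  qf A (x + y) - qf A x - qf A y.

Definition nonsingular (n : nat) (A : 'M['F_2]_n.+1) : bool :=
  [forall x : 'rV['F_2]_n.+1,
     ((x != 0) && [forall y : 'rV['F_2]_n.+1, polar A x y == 0]) ==> (qf A x != 0)].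

(* The projective subspace spanned by the rows of U is contained in the
   quadric (all its vectors are singular). A projective subspace of
   dimension d is a row space of rank d+1. *)
Definition tot_sing (n m : nat) (A : 'M['F_2]_n.+1) (U : 'M['F_2]_(m, n.+1)) : bool :=
  [forall v : 'rV['F_2]_n.+1, (v <= U)%MS ==> (qf A v == 0)].

Definition proj_index (n : nat) (A : 'M['F_2]_n.+1) (g : nat) : Prop :=
  (exists U : 'M['F_2]_n.+1, tot_sing A U /\ \rank U = g.+1) /\
  (forall U : 'M['F_2]_n.+1, tot_sing A U -> (\rank U <= g.+1)%N).

(* Points of the quadric (projective points of PG(n,2) = nonzero vectors). *)
Definition qpoints (n : nat) (A : 'M['F_2]_n.+1) : {set 'rV['F_2]_n.+1} :=
  [set v | (v != 0) && (qf A v == 0)].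

Definition gadj (n : nat) (A : 'M['F_2]_n.+1) (x y : 'rV['F_2]_n.+1) : bool :=
  (x != y) && tot_sing A (x + y)%MS.

Definition Xs (n : nat) (A S : 'M['F_2]_n.+1) : {set 'rV['F_2]_n.+1} :=
  [set x in qpoints A | ~~ (x <= S)%MS && tot_sing A (S + x)%MS].

Definition Ys (n : nat) (A S : 'M['F_2]_n.+1) : {set 'rV['F_2]_n.+1} :=
  qpoints A :\: Xs A S.

Definition switched (n : nat) (A S : 'M['F_2]_n.+1) (r : 'rV['F_2]_n.+1) : bool :=
  (r \in Ys A S) &&
  (2 * #|[set x in Xs A S | gadj A r x]| == #|Xs A S|)%N.

Definition gsadj (n : nat) (A S : 'M['F_2]_n.+1) (x y : 'rV['F_2]_n.+1) : bool :=
  if [&& x \in Ys A S, y \in Xs A S & switched A S x]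
     || [&& y \in Ys A S, x \in Xs A S & switched A S y]
  then ~~ gadj A x y else gadj A x y.

Definition is_clique_s (n : nat) (A S : 'M['F_2]_n.+1) (C : {set 'rV['F_2]_n.+1}) : bool :=
  (C \subset qpoints A) &&
  [forall x in C, forall y in C, (x != y) ==> gsadj A S x y].

(* Main.v *)
Require Import Defs.
From mathcomp Require Import all_boot all_order all_algebra.
From mathcomp Require Import ring zify.
Set Implicit Arguments. Unset Strict Implicit. Unset Printing Implicit Defensive.
Import GRing.Theory.
Local Open Scope ring_scope.



Lemma F2_cases (a : 'F_2) : a = 0 \/ a = 1.
Proof. case: a => [[|[|m]] Hm]; [left|right|]; try by apply: val_inj. by []. Qed.

Lemma F2_addd (a : 'F_2) : a + a = 0.
Proof. by case: (F2_cases a) => ->; apply/eqP. Qed.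

Lemma F2_neq0 (a : 'F_2) : a != 0 -> a = 1.
Proof. by case: (F2_cases a) => ->; rewrite ?eqxx. Qed.

Lemma F2_mulmm (a : 'F_2) : a * a = a.
Proof. by case: (F2_cases a) => ->; rewrite ?mul0r ?mul1r. Qed.

Section Q.
Variables (n : nat) (A : 'M['F_2]_n.+1).
Local Notation V := 'rV['F_2]_n.+1.
Definition PP := A + A^T.
Definition bf (x y : V) : 'F_2 := (x *m PP *m y^T) 0 0.

Lemma addE (M N : 'M['F_2]_1) : (M + N) 0 0 = M 0 0 + N 0 0.
Proof. by rewrite mxE. Qed.

Lemma polarE x y : polar A x y = bf x y.
Proof.
rewrite /polar /qf /bf /PP linearD /= !mulmxDl !mulmxDr !addE.
have -> : (y *m A *m x^T) 0 0 = ((y *m A *m x^T)^T) 0 0 by rewrite [RHS]mxE.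
rewrite !trmx_mul trmxK mulmxA.
rewrite mulmxDl addE.
ring.
Qed.

Lemma qfD x y : qf A (x + y) = qf A x + qf A y + bf x y.
Proof. rewrite -polarE /polar; ring. Qed.

Lemma vec_addd (x : V) : x + x = 0.
Proof. by apply/matrixP => i j; rewrite !mxE F2_addd. Qed.

Lemma qf0 : qf A 0 = 0.
Proof. by rewrite /qf !mul0mx mxE. Qed.

Lemma bfxx x : bf x x = 0.
Proof. by have := qfD x x; rewrite vec_addd qf0 F2_addd add0r. Qed.

Lemma bfC x y : bf x y = bf y x.
Proof. by rewrite -!polarE /polar [x + y]addrC; ring. Qed.

Lemma bfDl x y z : bf (x + y) z = bf x z + bf y z.
Proof. by rewrite /bf !mulmxDl addE. Qed.

Lemma bfZl k x y : bf (k *: x) y = k * bf x y.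
Proof. by rewrite /bf -!scalemxAl mxE. Qed.

Lemma bfDr x y z : bf x (y + z) = bf x y + bf x z.
Proof. by rewrite bfC bfDl !(bfC x). Qed.

Lemma bfZr k x y : bf x (k *: y) = k * bf x y.
Proof. by rewrite bfC bfZl bfC. Qed.

Lemma bf0r x : bf x 0 = 0.
Proof. by rewrite /bf linear0 mulmx0 mxE. Qed.

Lemma bf0l x : bf 0 x = 0.
Proof. by rewrite bfC bf0r. Qed.

Lemma qfZ k x : qf A (k *: x) = k * k * qf A x.
Proof. by rewrite /qf linearZ /= -!scalemxAl -scalemxAr !mxE mulrA. Qed.

Lemma entry_tr m (M : 'M['F_2]_(1, n.+1)) (N : 'M['F_2]_(m, n.+1)) j :
  (M *m N^T) 0 j = (M *m (row j N)^T) 0 0.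
Proof.
rewrite !mxE; apply: eq_bigr => k _; by rewrite !mxE.
Qed.

Lemma bf_sub_kerP x (S : 'M['F_2]_n.+1) :
  reflect (forall v, (v <= S)%MS -> bf x v = 0) (x <= kermx (PP *m S^T))%MS.
Proof.
apply: (iffP sub_kermxP) => [H v /submxP [D ->] | H].
  by rewrite /bf trmx_mul !mulmxA -(mulmxA x) H mul0mx mxE.
apply/matrixP => i j; rewrite (ord1 i) mulmxA entry_tr [RHS]mxE.
exact: H (row_sub _ _).
Qed.

Lemma ts_sub (U W : 'M['F_2]_n.+1) : tot_sing A U -> (W <= U)%MS -> tot_sing A W.
Proof.
move=> /forallP H WU; apply/forallP => v; apply/implyP => vW.
exact: (implyP (H v)) (submx_trans vW WU).
Qed.

Lemma ts_bf m (U : 'M['F_2]_(m, n.+1)) x y : tot_sing A U ->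
  (x <= U)%MS -> (y <= U)%MS -> bf x y = 0.
Proof.
move=> /forallP H xU yU.
have qx := eqP (implyP (H x) xU); have qy := eqP (implyP (H y) yU).
have := eqP (implyP (H (x + y)) (addmx_sub xU yU)).
by rewrite qfD qx qy !add0r.
Qed.

Lemma sub_add_row m (x : V) (U : 'M['F_2]_(m, n.+1)) v :
  (v <= x + U)%MS -> exists k w, (w <= U)%MS /\ v = k *: x + w.
Proof.
case/sub_addsmxP => [[u1 u2] /= ->]; exists (u1 0 0), (u2 *m U); split.
  exact: submxMl.
by rewrite {1}[u1]mx11_scalar mul_scalar_mx.
Qed.

Lemma ts_addrow m (x : V) (U : 'M['F_2]_(m, n.+1)) : tot_sing A U -> qf A x = 0 ->
  (forall v, (v <= U)%MS -> bf x v = 0) -> tot_sing A (x + U)%MS.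
Proof.
move=> /forallP H qx Hb; apply/forallP => v; apply/implyP => /sub_add_row [k [w [wU ->]]].
by rewrite qfD qfZ qx (eqP (implyP (H w) wU)) bfZl Hb // !mulr0 !addr0.
Qed.

Lemma gadj_ts x y : qf A x = 0 -> qf A y = 0 -> tot_sing A (x + y)%MS = (bf x y == 0).
Proof.
move=> qx qy; apply/idP/idP => [H|/eqP H].
  by rewrite (ts_bf H (addsmxSl _ _) (addsmxSr _ _)).
apply: ts_addrow => //.
  by apply/forallP => v; apply/implyP => /sub_rVP [k ->]; rewrite qfZ qy mulr0.
by move=> v /sub_rVP [k ->]; rewrite bfZr H mulr0.
Qed.

Definition spans (s : seq V) : 'M['F_2]_n.+1 := foldr (fun x U => (x + U)%MS) 0 s.

Lemma mem_spans s x : x \in s -> (x <= spans s)%MS.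
Proof.
elim: s => //= y s IH; rewrite inE => /orP [/eqP -> | /IH H].
  exact: addsmxSl.
exact: submx_trans H (addsmxSr _ _).
Qed.

Lemma spans_orth s x : (forall y, y \in s -> bf y x = 0) ->
  forall v, (v <= spans s)%MS -> bf v x = 0.
Proof.
elim: s => [_ v /=|y s IH H v /= /sub_add_row [k [w [ws ->]]]].
  by rewrite submx0 => /eqP ->; rewrite bf0l.
rewrite bfDl bfZl H ?mem_head // IH // => [|z zs]; last by apply: H; rewrite inE zs orbT.
by rewrite mulr0 addr0.
Qed.

Lemma spans_ts s : (forall x, x \in s -> qf A x = 0) ->
  (forall x y, x \in s -> y \in s -> bf x y = 0) -> tot_sing A (spans s).
Proof.
elim: s => [_ _|y s IH Hq Hb] /=.
  by apply/forallP => v; apply/implyP; rewrite submx0 => /eqP ->; rewrite qf0.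
apply: ts_addrow.
- apply: IH => [x xs|x z xs zs]; [apply: Hq|apply: Hb]; by rewrite inE ?xs ?zs orbT.
- by apply: Hq; rewrite mem_head.
- move=> v vs; rewrite bfC; apply: spans_orth vs => z zs.
  by apply: Hb; rewrite inE ?zs ?eqxx ?orbT.
Qed.

Lemma card_rowsp m (W : 'M['F_2]_(m, n.+1)) :
  #|[set v : V | (v <= W)%MS]| = (2 ^ \rank W)%N.
Proof.
have -> : [set v : V | (v <= W)%MS] = [set y *m row_base W | y in [set: 'rV['F_2]_(\rank W)]].
  apply/setP => v; rewrite inE; apply/idP/imsetP => [|[y _ ->]].
    move=> vW; have : (v <= row_base W)%MS by rewrite eq_row_base.
    by case/submxP => D ->; exists D; rewrite ?inE.
  by apply: submx_trans (submxMl y (row_base W)) _; rewrite eq_row_base.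
rewrite card_imset; last exact: row_free_inj (row_base_free W).
by rewrite cardsT card_mx card_Fp // mul1n.
Qed.

End Q.



Section S.
Variables (n : nat) (A S : 'M['F_2]_n.+1).
Hypothesis HS : tot_sing A S.
Local Notation V := 'rV['F_2]_n.+1.
Local Notation perp := (kermx (PP A *m S^T)).
Local Notation bf := (bf A).

Lemma S_perp : (S <= perp)%MS.
Proof.
apply/row_subP => i; apply/bf_sub_kerP => v vS.
exact: ts_bf HS (row_sub _ _) vS.
Qed.

Lemma qS v : (v <= S)%MS -> qf A v = 0.
Proof. by move=> vS; apply/eqP; exact: (implyP (forallP HS v)) vS. Qed.

Lemma qpointsE x : (x \in qpoints A) = (x != 0) && (qf A x == 0).
Proof. by rewrite inE. Qed.

Lemma ts_addC (x : V) : tot_sing A (S + x)%MS = tot_sing A (x + S)%MS.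
Proof.
by apply/idP/idP => H; apply: ts_sub H _; rewrite addsmxC.
Qed.

Lemma XsE x : (x \in Xs A S) = [&& x \in qpoints A, ~~ (x <= S)%MS & (x <= perp)%MS].
Proof.
rewrite inE; case: (boolP (x \in qpoints A)) => //= xQ; congr (_ && _).
have qx : qf A x = 0 by apply/eqP; move: xQ; rewrite qpointsE => /andP [].
rewrite ts_addC; apply/idP/idP => [H | H].
  apply/bf_sub_kerP => v vS.
  exact: ts_bf H (addsmxSl _ _) (submx_trans vS (addsmxSr _ _)).
apply: ts_addrow => //; exact/bf_sub_kerP.
Qed.

Lemma inS_gadj x z : (x <= S)%MS -> z \in Xs A S -> gadj A x z.
Proof.
move=> xS zX; have := zX; rewrite inE => /andP [_ /andP [zS Hz]].
rewrite /gadj; apply/andP; split.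
  by apply/eqP => E; move: zS; rewrite -E xS.
apply: ts_sub Hz _; exact: addsmxS.
Qed.

Lemma inS_not_switched x y : (x <= S)%MS -> y \in Xs A S -> ~~ switched A S x.
Proof.
move=> xS yX; rewrite /switched negb_and; apply/orP; right.
have -> : [set z in Xs A S | gadj A x z] = Xs A S.
  by apply/setP => z; rewrite inE; case: (boolP (z \in Xs A S)) => //= /(inS_gadj xS).
have : (0 < #|Xs A S|)%N by apply/card_gt0P; exists y.
by move=> H; apply/negP => /eqP E; lia.
Qed.

Lemma addsame (x a : V) : x + a + a = x.
Proof. by rewrite -addrA vec_addd addr0. Qed.

Lemma Xs_shift x a : (a <= S)%MS -> x \in Xs A S -> x + a \in Xs A S.
Proof.
move=> aS; rewrite !XsE !qpointsE => /and3P [/andP [x0 qx] xS xP].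
apply/and3P; split.
- apply/andP; split.
    apply/eqP => E; move: xS; have -> : x = a by rewrite -(addsame x a) E add0r.
    by rewrite aS.
  by rewrite qfD (eqP qx) qS // (bf_sub_kerP _ _ _ xP) // !addr0.
- by apply: contra xS => H; rewrite -(addsame x a) addmx_sub.
- by rewrite addmx_sub // (submx_trans aS S_perp).
Qed.

Lemma gadjE x y : x \in qpoints A -> y \in qpoints A -> gadj A x y = (x != y) && (bf x y == 0).
Proof.
rewrite !qpointsE => /andP [_ /eqP qx] /andP [_ /eqP qy].
by rewrite /gadj gadj_ts.
Qed.

Lemma half_nbrs r : r \in qpoints A -> ~~ (r <= perp)%MS ->
  (2 * #|[set x in Xs A S | gadj A r x]| = #|Xs A S|)%N.
Proof.
move=> rQ rP.
have [j Hj] : exists j, bf r (row j S) != 0.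
  apply/existsP; apply: contraR rP; rewrite negb_exists => /forallP H.
  apply/sub_kermxP; apply/matrixP => i k; rewrite (ord1 i) mulmxA entry_tr [RHS]mxE.
  by apply/eqP; rewrite -[_ == _]negbK H.
set a := row j S; have aS : (a <= S)%MS by exact: row_sub.
have ra : bf r a = 1 by exact: F2_neq0.
set G := [set x | gadj A r x].
have NE : [set x in Xs A S | gadj A r x] = Xs A S :&: G.
  by apply/setP => x; rewrite !inE.
have gE : forall x, x \in Xs A S -> gadj A r x = (bf r x == 0).
  move=> x xX; rewrite gadjE //; last by move: xX; rewrite inE => /andP [].
  have -> // : r != x by apply/eqP => E; move: xX rP; rewrite XsE E => /and3P [_ _ ->].
have Gm : forall x, (x \in G) = gadj A r x by move=> x; rewrite inE.
have IE : [set x + a | x in Xs A S :&: G] = Xs A S :\: G.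
  apply/setP => y; apply/imsetP/idP => [[x] | yD].
    rewrite in_setI Gm => /andP [xX xG] ->; rewrite in_setD Xs_shift // andbT Gm.
    rewrite gE; last by rewrite Xs_shift.
    rewrite bfDr ra.
    by rewrite gE // in xG; rewrite (eqP xG) add0r.
  move: yD; rewrite in_setD Gm => /andP [yG yX]; exists (y + a); last by rewrite addsame.
  rewrite in_setI Xs_shift //= Gm gE; last by rewrite Xs_shift.
  rewrite bfDr ra.
  by rewrite gE // in yG; rewrite (F2_neq0 yG) F2_addd.
rewrite NE -(cardsID G (Xs A S)) -IE card_imset; first by rewrite mul2n -addnn.
exact: addIr.
Qed.

Lemma switched_nP r : r \in qpoints A -> ~~ (r <= perp)%MS -> switched A S r.
Proof.
move=> rQ rP; rewrite /switched (half_nbrs rQ rP) eqxx andbT in_setD rQ andbT.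
by apply: contra rP; rewrite XsE => /and3P [].
Qed.

End S.



Section B.
Variables (n : nat) (A : 'M['F_2]_n.+1).
Local Notation V := 'rV['F_2]_n.+1.
Local Notation bf := (bf A).

Lemma card_subD m (W : 'M['F_2]_(m, n.+1)) :
  #|[set v : V | (v <= W)%MS] :\ 0| = (2 ^ \rank W - 1)%N.
Proof.
have := cardsD1 0 [set v : V | (v <= W)%MS].
by rewrite card_rowsp inE sub0mx add1n => ->; rewrite subn1.
Qed.

Lemma pairwise_bound g (D : {set V}) : proj_index A g ->
  (forall x, x \in D -> x != 0 /\ qf A x = 0) ->
  (forall x y, x \in D -> y \in D -> bf x y = 0) -> (#|D| <= 2 ^ g.+1 - 1)%N.
Proof.
move=> [_ Hg] Hq Hb.
have tsW : tot_sing A (spans (enum D)).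
  apply: spans_ts => [x|x y]; rewrite !mem_enum => *; [exact: (Hq _ _).2 | exact: Hb].
have rk := Hg _ tsW.
have sub : D \subset [set v : V | (v <= spans (enum D))%MS] :\ 0.
  apply/subsetP => x xD; rewrite !inE (Hq _ xD).1 /=.
  by apply: mem_spans; rewrite mem_enum.
apply: leq_trans (subset_leq_card sub) _; rewrite card_subD leq_sub2r //.
by rewrite leq_exp2l.
Qed.

Lemma ts_sum m1 m2 (U1 : 'M['F_2]_(m1, n.+1)) (U2 : 'M['F_2]_(m2, n.+1)) :
  tot_sing A U1 -> tot_sing A U2 ->
  (forall v w, (v <= U1)%MS -> (w <= U2)%MS -> bf v w = 0) -> tot_sing A (U1 + U2)%MS.
Proof.
move=> /forallP H1 /forallP H2 Hb; apply/forallP => v; apply/implyP.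
case/sub_addsmxP => [[u1 u2] /= ->].
rewrite qfD (eqP (implyP (H1 _) (submxMl _ _))) (eqP (implyP (H2 _) (submxMl _ _))).
by rewrite Hb ?submxMl // !addr0.
Qed.

Lemma PP_tr : (PP A)^T = PP A.
Proof. by rewrite /PP linearD /= trmxK addrC. Qed.

Lemma lower g (S : 'M['F_2]_n.+1) : tot_sing A S -> proj_index A g ->
  exists C : {set V}, is_clique_s A S C /\ #|C| = (2 ^ g.+1 - 1)%N.
Proof.
move=> HS [[U [tsU rkU]] Hg].
set M := PP A *m S^T.
set W1 := (U :&: kermx M)%MS.
set W := (W1 + S)%MS.
have W1P : (W1 <= kermx M)%MS by exact: capmxSr.
have tsW : tot_sing A W.
  apply: ts_sum => //; first by apply: ts_sub tsU (capmxSl _ _).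
  move=> v w vW wS; exact: (bf_sub_kerP _ _ _ (submx_trans vW W1P)).
have WP : (W <= kermx M)%MS by rewrite addsmx_sub W1P S_perp.
have rkW : \rank W = g.+1.
  apply/eqP; rewrite eqn_leq Hg //=.
  set N := PP A *m U^T.
  have h1 := mxrank_mul_ker U M.
  have h2 := mxrank_sum_cap W1 S.
  have h3 := mxrank_mul_ker S N.
  have h4 : \rank (U *m M) = \rank (S *m N).
    by rewrite -mxrank_tr /M /N !trmx_mul trmxK PP_tr mulmxA.
  have h5 : (\rank (W1 :&: S) <= \rank (S :&: kermx N))%N.
    apply: mxrankS; rewrite sub_capmx capmxSr /=.
    apply/row_subP => i; apply/bf_sub_kerP => w wU.
    apply: ts_bf tsU _ wU; apply: submx_trans (row_sub i _) _.
    apply: submx_trans (capmxSl _ _) _; exact: capmxSl.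
  rewrite -/W in h2; rewrite -/W1 in h1; rewrite rkU in h1.
  rewrite h4 in h1. rewrite -h3 in h2.
  set r1 := \rank W1 in h1 h2. set r2 := \rank (S *m N) in h1 h2. set r3 := \rank (S :&: kermx N) in h2 h5. set r4 := \rank (W1 :&: S) in h2 h5.
  lia.
exists ([set v : V | (v <= W)%MS] :\ 0); split; last by rewrite card_subD rkW.
apply/andP; split.
  apply/subsetP => v; rewrite !inE => /andP [v0 vW]; rewrite v0 /=.
  exact: (implyP (forallP tsW v)) vW.
apply/forallP => x; apply/implyP; rewrite !inE => /andP [x0 xW].
apply/forallP => y; apply/implyP; rewrite !inE => /andP [y0 yW]; apply/implyP => xy.
have xQ : x \in qpoints A by rewrite inE x0 (implyP (forallP tsW x)).
have yQ : y \in qpoints A by rewrite inE y0 (implyP (forallP tsW y)).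
have noc : forall u w, u \in qpoints A -> (u <= W)%MS -> u \in Ys A S -> w \in Xs A S ->
    ~~ switched A S u.
  move=> u w uQ uW uY wX; apply: (inS_not_switched HS _ wX).
  move: uY; rewrite in_setD XsE.
  move=> /andP [H _]; apply: contraR H => nS; apply/and3P; split => //.
  exact: submx_trans uW WP.
exact: HS.
rewrite /gsadj.

have -> : [&& x \in Ys A S, y \in Xs A S & switched A S x] = false.
  by apply/negP => /and3P [xY yX sx]; move: sx; apply/negP; exact: noc xQ xW xY yX.
have -> : [&& y \in Ys A S, x \in Xs A S & switched A S y] = false.
  by apply/negP => /and3P [yY xX sy]; move: sy; apply/negP; exact: noc yQ yW yY xX.
rewrite /= /gadj xy /=; apply: ts_sub tsW _; by rewrite addsmx_sub xW yW.
Qed.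

End B.



Section H.
Variables (n : nat) (A : 'M['F_2]_n.+1).
Local Notation V := 'rV['F_2]_n.+1.
Local Notation bf := (bf A).

Lemma card_shift (C K : {set V}) (t : V) : K \subset C ->
  (forall x, x \in K -> x + t \notin C :\: K) ->
  (#|C| <= #|(C :\: K) :|: [set (x + t)%R | x : V in K]|)%N.
Proof.
move=> KC Hd.
have I0 : (C :\: K) :&: [set (x + t)%R | x : V in K] = set0.
  apply/setP => v; rewrite in_setI in_set0; apply/negP => /andP [H /imsetP [x xK E]].
  by move: (Hd x xK); rewrite -E H.
rewrite cardsU I0 cards0 subn0 card_imset; last exact: addIr.
by rewrite -(cardsID K C) (setIidPr KC) addnC.
Qed.

Lemma pw_union (P1 P2 : {set V}) :
  (forall v w, v \in P1 -> w \in P1 -> bf v w = 0) ->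
  (forall v w, v \in P2 -> w \in P2 -> bf v w = 0) ->
  (forall v w, v \in P1 -> w \in P2 -> bf v w = 0) ->
  forall v w, v \in P1 :|: P2 -> w \in P1 :|: P2 -> bf v w = 0.
Proof.
move=> H1 H2 H12 v w; rewrite !inE => /orP [v1|v2] /orP [w1|w2]; auto.
by rewrite bfC; auto.
Qed.

Lemma pw_img (K : {set V}) t :
  (forall x y, x \in K -> y \in K -> bf (x + t) (y + t) = 0) ->
  forall v w, v \in [set (x + t)%R | x : V in K] -> w \in [set (x + t)%R | x : V in K] -> bf v w = 0.
Proof. by move=> H v w /imsetP [x xK ->] /imsetP [y yK ->]; apply: H. Qed.

End H.



Section U.
Variables (n : nat) (A S : 'M['F_2]_n.+1) (g : nat).
Hypothesis HS : tot_sing A S.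
Hypothesis Hg : proj_index A g.
Local Notation V := 'rV['F_2]_n.+1.
Local Notation bf := (bf A).
Local Notation perp := (kermx (PP A *m S^T)).

Variable C : {set V}.
Hypothesis HC : is_clique_s A S C.

Definition Zs := [set c in C | switched A S c].

Lemma CQ x : x \in C -> x \in qpoints A.
Proof. by move: HC => /andP [/subsetP H _]; apply: H. Qed.

Lemma qpt x : x \in qpoints A -> x != 0 /\ qf A x = 0.
Proof. by rewrite qpointsE => /andP [-> /eqP]. Qed.

Lemma XsQ x : x \in Xs A S -> x \in qpoints A.
Proof. by rewrite (XsE HS) => /andP []. Qed.

Lemma XsP x : x \in Xs A S -> (x <= perp)%MS.
Proof. by rewrite (XsE HS) => /and3P []. Qed.

Lemma ZsC z : z \in Zs -> z \in C.
Proof. by rewrite inE => /andP []. Qed.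

Lemma ZsX z : z \in Zs -> z \notin Xs A S.
Proof. by rewrite inE => /andP [_ /andP [zY _]]; move: zY; rewrite in_setD => /andP []. Qed.

Lemma condE x y : x \in C -> y \in C ->
  [&& x \in Ys A S, y \in Xs A S & switched A S x] = (x \in Zs) && (y \in Xs A S).
Proof.
move=> xC yC; rewrite [x \in Zs]inE xC /=.
case sx: (switched A S x); rewrite ?andbF ?andbT //.
by move: sx; rewrite /switched => /andP [-> _].
Qed.

Lemma pairs x y : x \in C -> y \in C ->
  bf x y = if ((x \in Zs) && (y \in Xs A S)) || ((y \in Zs) && (x \in Xs A S)) then 1 else 0.
Proof.
move=> xC yC; case: (eqVneq x y) => [<- | xy].
  rewrite bfxx orbb; case: (boolP (x \in Zs)) => // /ZsX /negbTE ->; by [].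
move: HC => /andP [_ /forallP H]; move: (H x) => /implyP /(_ xC) /forallP /(_ y).
move=> /implyP /(_ yC) /implyP /(_ xy).
rewrite /gsadj !condE // gadjE ?CQ // xy /=.
case: ifP => _; last by move/eqP.
exact: F2_neq0.
Qed.

Lemma pairs0 x y : x \in C -> y \in C -> x \notin Zs -> y \notin Zs -> bf x y = 0.
Proof.
move=> xC yC xZ yZ; rewrite pairs //.
by case: ifP => // /orP [/andP [H _] | /andP [H _]]; [move/negP: xZ | move/negP: yZ].
Qed.

Lemma pairs1 x y : x \in Zs -> y \in C -> y \in Xs A S -> bf x y = 1.
Proof. by move=> xZ yC yX; rewrite pairs ?(ZsC xZ) // xZ yX. Qed.

Lemma upper_easy : (Zs = set0 \/ C :&: Xs A S = set0) -> (#|C| <= 2 ^ g.+1 - 1)%N.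
Proof.
move=> H; apply: pairwise_bound Hg _ _ => [x xC | x y xC yC]; first exact: qpt (CQ xC).
rewrite pairs //; case: H => E.
  by rewrite E !in_set0.
have nX : forall v, v \in C -> v \notin Xs A S.
  by move=> v vC; apply/negP => vX; move: (in_setI v C (Xs A S)); rewrite E in_set0 vC vX.
by rewrite (negbTE (nX _ xC)) (negbTE (nX _ yC)) !andbF.
Qed.


Lemma pairsN x y : x \in C -> y \in C ->
  ~~ (((x \in Zs) && (y \in Xs A S)) || ((y \in Zs) && (x \in Xs A S))) -> bf x y = 0.
Proof. by move=> xC yC /negbTE H; rewrite pairs // H. Qed.

Lemma pairsZ x y : x \in Zs -> y \in Zs -> bf x y = 0.
Proof.
move=> xZ yZ; apply: pairsN; rewrite ?ZsC //.
by rewrite (negbTE (ZsX xZ)) (negbTE (ZsX yZ)) !andbF.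
Qed.

Lemma ZnP x0 z : x0 \in Xs A S -> z \in Zs -> ~~ (z <= perp)%MS.
Proof.
move=> x0X zZ; apply/negP => zP.
have zQ := CQ (ZsC zZ).
have zS : (z <= S)%MS.
  move: (ZsX zZ); rewrite (XsE HS) zQ zP /= andbT.
  by case: (z <= S)%MS.
move: zZ; rewrite inE => /andP [_ sw].
by move: (inS_not_switched HS zS x0X); rewrite sw.
Qed.

Lemma RS r : r \in C -> r \notin Zs -> r \notin Xs A S -> (r <= S)%MS.
Proof.
move=> rC rZ rX; have rQ := CQ rC.
have rP : (r <= perp)%MS.
  apply: contraR rZ => nP; rewrite inE rC /=.
  apply: (switched_nP HS rQ); exact: nP.
move: rX; rewrite (XsE HS) rQ rP /= andbT.
by case: (r <= S)%MS.
Qed.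

Lemma CP v : v \in C -> v \notin Zs -> (v <= perp)%MS.
Proof.
move=> vC vZ; case: (boolP (v \in Xs A S)) => vX; first exact: XsP.
exact: submx_trans (RS vC vZ vX) (S_perp HS).
Qed.


Lemma XnZ x : x \in Xs A S -> x \notin Zs.
Proof. by move=> xX; apply/negP => /ZsX; rewrite xX. Qed.

Lemma case1 (a : V) : (a <= S)%MS -> (forall z, z \in Zs -> bf z a = 1) ->
  (#|C| <= 2 ^ g.+1 - 1)%N.
Proof.
move=> aS za; set K := C :&: Xs A S.
have KX : forall x, x \in K -> x \in Xs A S by move=> x; rewrite in_setI => /andP [].
have KC : forall x, x \in K -> x \in C by move=> x; rewrite in_setI => /andP [].
have DC : forall v, v \in C :\: K -> v \in C /\ v \notin Xs A S.
  move=> v; rewrite in_setD in_setI => /andP [H vC]; split => //.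
  by apply: contra H => ->; rewrite vC.
apply: leq_trans (card_shift (t:=a) (subsetIl _ _) _) _.
  move=> x xK; apply/negP => /DC [_]; by rewrite (Xs_shift HS aS (KX _ xK)).
apply: pairwise_bound Hg _ _.
  move=> v; rewrite in_setU => /orP [/DC [vC _] | /imsetP [x xK ->]]; first exact: qpt (CQ vC).
  exact: qpt (XsQ (Xs_shift HS aS (KX _ xK))).
apply: pw_union; last first.
- move=> v w /DC [vC vX] /imsetP [x xK ->]; rewrite bfDr.
  case: (boolP (v \in Zs)) => vZ.
    by rewrite (pairs1 vZ (KC _ xK) (KX _ xK)) za // F2_addd.
  have vS := RS vC vZ vX.
  rewrite (pairsN vC (KC _ xK)); last by rewrite (negbTE vZ) (negbTE vX) /= andbF.
  by rewrite (ts_bf HS vS aS) addr0.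
- apply: pw_img => x y xK yK.
  rewrite !bfDl !bfDr bfxx (bfC A a y).
  rewrite (pairsN (KC _ xK) (KC _ yK)); last by rewrite (negbTE (XnZ (KX _ xK))) (negbTE (XnZ (KX _ yK))).
  by rewrite !(bf_sub_kerP _ _ _ (XsP (KX _ _))) // !addr0.
- move=> v w /DC [vC vX] /DC [wC wX]; apply: pairsN => //.
  by rewrite (negbTE vX) (negbTE wX) !andbF.
Qed.


Lemma case2 x0 (u : V) : x0 \in Xs A S -> (u <= perp)%MS -> qf A u = 0 ->
  (forall z, z \in Zs -> bf z u = 0) ->
  (forall x, x \in C -> x \in Xs A S -> bf u x = 1) ->
  (#|C| <= 2 ^ g.+1 - 1)%N.
Proof.
move=> x0X uP qu zu ux.
have ZC : Zs \subset C by apply/subsetP => z; exact: ZsC.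
have DC : forall v, v \in C :\: Zs -> v \in C /\ v \notin Zs.
  by move=> v; rewrite in_setD => /andP [].
have zuP : forall z, z \in Zs -> ~~ ((z + u)%R <= perp)%MS.
  move=> z zZ; apply: contra (ZnP x0X zZ) => H.
  by rewrite -(addsame z u); apply: addmx_sub.
apply: leq_trans (card_shift (t:=u) ZC _) _.
  move=> z zZ; apply/negP => /DC [vC vZ].
  by move: (zuP _ zZ); rewrite (CP vC vZ).
apply: pairwise_bound Hg _ _.
  move=> v; rewrite in_setU => /orP [/DC [vC _] | /imsetP [z zZ ->]]; first exact: qpt (CQ vC).
  split; last by rewrite qfD qu zu // (qpt (CQ (ZsC zZ))).2 !addr0.
  by apply: contraNneq (zuP _ zZ) => ->; exact: sub0mx.
apply: pw_union; last first.
- move=> v w /DC [vC vZ] /imsetP [z zZ ->]; rewrite bfDr.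
  case: (boolP (v \in Xs A S)) => vX.
    by rewrite bfC (pairs1 zZ vC vX) bfC ux // F2_addd.
  rewrite (pairsN vC (ZsC zZ)); last by rewrite (negbTE vZ) (negbTE vX) /= andbF.
  by rewrite bfC (bf_sub_kerP _ _ _ uP) ?(RS vC vZ vX) // addr0.
- apply: pw_img => x y xZ yZ.
  rewrite !bfDl !bfDr bfxx (bfC A u y) (pairsZ xZ yZ) !zu //.
  by rewrite !addr0.
- move=> v w /DC [vC vZ] /DC [wC wZ]; apply: pairsN => //.
  by rewrite (negbTE vZ) (negbTE wZ).
Qed.


Lemma upper_mixed x0 z0 : x0 \in C -> x0 \in Xs A S -> z0 \in Zs ->
  (#|C| <= 2 ^ g.+1 - 1)%N.
Proof.
move=> x0C x0X z0Z.
pose Zm : 'M['F_2]_(#|Zs|, n.+1) := \matrix_(i < #|Zs|) (enum_val i : V).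
have rowZ : forall i, row i Zm \in Zs by move=> i; rewrite rowK enum_valP.
have Zall : forall z, z \in Zs -> exists i, z = row i Zm.
  by move=> z zZ; exists (enum_rank_in z0Z z); rewrite rowK enum_rankK_in.
pose G := Zm *m PP A *m S^T.
pose ones : 'rV['F_2]_#|Zs| := const_mx 1.
case: (boolP (ones <= G^T)%MS) => [/submxP [y Hy] | nO].
  apply: (case1 (a := y *m S)); first exact: submxMl.
  move=> z zZ; have [i ->] := Zall z zZ.
  rewrite /bf trmx_mul !mulmxA -!row_mul mxE.
  have -> : G *m y^T = (y *m G^T)^T by rewrite trmx_mul trmxK.
  by rewrite -Hy !mxE.
rewrite submxE in nO.
have [j Hj] : exists j, (ones *m cokermx G^T) 0 j != 0.
  apply/existsP; apply: contraR nO; rewrite negb_exists => /forallP H.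
  apply/eqP/matrixP => i j'; rewrite (ord1 i) [RHS]mxE.
  by apply/eqP; rewrite -[_ == _]negbK H.
pose c := col j (cokermx G^T).
have Gc : G^T *m c = 0 by rewrite /c !colE mulmxA mulmx_coker mul0mx.
pose u := c^T *m Zm.
have uP : (u <= perp)%MS.
  apply/sub_kermxP; rewrite /u -mulmxA (mulmxA Zm) -/G.
  have -> : c^T *m G = (G^T *m c)^T by rewrite trmx_mul trmxK.
  by rewrite Gc trmx0.
have uspan : (u <= spans (enum Zs))%MS.
  apply: submx_trans (submxMl _ _) _; apply/row_subP => i; apply: mem_spans.
  by rewrite mem_enum; exact: rowZ.
have tsZ : tot_sing A (spans (enum Zs)).
  apply: spans_ts => [z|z z']; rewrite !mem_enum => zZ.
    exact: (qpt (CQ (ZsC zZ))).2.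
  by move=> z'Z; exact: pairsZ.
have qu : qf A u = 0 by apply/eqP; exact: (implyP (forallP tsZ u) uspan).
have zu : forall z, z \in Zs -> bf z u = 0.
  move=> z zZ; rewrite bfC; apply: spans_orth uspan => y; rewrite mem_enum => yZ.
  exact: pairsZ yZ zZ.
have ux : forall x, x \in C -> x \in Xs A S -> bf u x = 1.
  move=> x xC xX.
  have E : Zm *m PP A *m x^T = ones^T.
    apply/matrixP => i k'; rewrite (ord1 k') [RHS]mxE /ones [RHS]mxE.
    have -> : (Zm *m PP A *m x^T) i 0 = (row i (Zm *m PP A *m x^T)) 0 0 by rewrite [RHS]mxE.
    rewrite !row_mul; exact: pairs1 (rowZ i) xC xX.
  rewrite /bf /u -!mulmxA (mulmxA Zm) E.
  have -> : c^T *m ones^T = (ones *m c)^T by rewrite trmx_mul.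
  rewrite mxE /c colE mulmxA -colE mxE.
  exact: F2_neq0.
exact: case2 x0X uP qu zu ux.
Qed.

Lemma upper : (#|C| <= 2 ^ g.+1 - 1)%N.
Proof.
case: (set_0Vmem Zs) => [Z0 | [z0 z0Z]]; first by apply: upper_easy; left.
case: (set_0Vmem (C :&: Xs A S)) => [X0 | [x0]]; first by apply: upper_easy; right.
by rewrite in_setI => /andP [x0C x0X]; exact: upper_mixed x0C x0X z0Z.
Qed.

End U.

Unset Implicit Arguments.

Theorem lemma5p5 (n g s : nat) (A S : 'M['F_2]_n.+1) :
  nonsingular A -> proj_index A g -> (1 <= g)%N -> (s < g)%N ->
  tot_sing A S -> \rank S = s.+1 ->
  (exists C : {set 'rV['F_2]_n.+1}, is_clique_s A S C /\ #|C| = (2 ^ g.+1 - 1)%N) /\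
  (forall C : {set 'rV['F_2]_n.+1}, is_clique_s A S C -> (#|C| <= 2 ^ g.+1 - 1)%N).
Proof.
move=> _ Hg _ _ HS _; split; first exact: lower HS Hg.
move=> C HC; exact: (upper HS Hg HC).
Qed.
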